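(* Let $n\ge4$ and let $\eta$ be a homogeneous integrable 2-form of degree one on $\mathbb{C}^n$ with $d\eta\not\equiv0$. Then there exist linear coordinates $(x_1,\dots,x_n)$ on $\mathbb{C}^n$ such that $d\eta=dx_1\wedge dx_2\wedge dx_3$ and $\eta=\sum_{1\le i<j\le3}B_{ij}(x_1,x_2,x_3)\,dx_i\wedge dx_j$, where the $B_{ij}$ are linear forms depending only on $x_1,x_2,x_3$; more precisely $\eta=x_1\,dx_2\wedge dx_3+d\alpha$ with $\alpha=\sum_{j=1}^3A_j(x_1,x_2,x_3)\,dx_j$, $A_j$ homogeneous quadratic polynomials.
   Context: A form is homogeneous of degree $m$ if its coefficients (in linear coordinates) are homogeneous polynomials of degree $m$. A holomorphic $q$-form $\eta$ is integrable if every point $p$ outside its zero set has a neighborhood $V$ with holomorphic 1-forms $\omega_1,\dots,\omega_q$ on $V$ such that $\eta|_V=\omega_1\wedge\cdots\wedge\omega_q$ and $d\omega_j\wedge\eta=0$ for all $j$. *)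

(* Defs.v *)
From Stdlib Require Import Reals Lra Lia.

Definition Cx := (R * R)%type.
Definition C0 : Cx := (0%R, 0%R).
Definition Cadd (x y : Cx) : Cx := (fst x + fst y, snd x + snd y)%R.
Definition Copp (x : Cx) : Cx := (- fst x, - snd x)%R.
Definition Csub (x y : Cx) : Cx := Cadd x (Copp y).
Definition Cmul (x y : Cx) : Cx :=
  (fst x * fst y - snd x * snd y, fst x * snd y + snd x * fst y)%R.
Definition Cnorm (x : Cx) : R := sqrt (fst x ^ 2 + snd x ^ 2)%R.
Definition Cdelta (i j : nat) : Cx := if Nat.eqb i j then (1%R, 0%R) else C0.

Fixpoint Csum (n : nat) (f : nat -> Cx) : Cx :=
  match n with O => C0 | S m => Cadd (Csum m f) (f m) end.

(* A point of Cx^n is z : nat -> Cx; only the coordinates z 0, ..., z (n-1)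
   are meaningful. *)
Definition Cn := nat -> Cx.

Fixpoint vnorm (n : nat) (z : Cn) : R :=
  match n with O => 0%R | S m => Rmax (vnorm m z) (Cnorm (z m)) end.

Definition vadd (z h : Cn) : Cn := fun i => Cadd (z i) (h i).
Definition vsub (z h : Cn) : Cn := fun i => Csub (z i) (h i).

Definition in_ball (n : nat) (p : Cn) (r : R) (z : Cn) : Prop :=
  (vnorm n (vsub z p) < r)%R.

Definition has_cderiv (n : nat) (f : Cn -> Cx) (z : Cn) (g : nat -> Cx) : Prop :=
  forall eps : R, (eps > 0)%R ->
  exists delta : R, (delta > 0)%R /\
    forall h : Cn, (forall i, (n <= i)%nat -> h i = C0) ->
      (vnorm n h < delta)%R ->
      (Cnorm (Csub (Csub (f (vadd z h)) (f z)) (Csum n (fun k => Cmul (g k) (h k))))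
        <= eps * vnorm n h)%R.

(* A 2-form is given by coefficients E a b (z), meaning
   sum_{a<b<n} E a b z dz_a /\ dz_b ; entries with a >= b are ignored.
   Its full antisymmetric coefficient matrix: *)
Definition full2 (E : nat -> nat -> Cn -> Cx) (a b : nat) (z : Cn) : Cx :=
  if Nat.ltb a b then E a b z
  else if Nat.ltb b a then Copp (E b a z) else C0.

(* 1-form  sum_i f i dz_i ;  D i k = d f_i / d z_k.
   d( sum_i f_i dz_i ) = sum_{a,b} D b a dz_a /\ dz_b, so its (a,b)-coefficient
   (a<b) is  D b a - D a b.  *)
Definition d1form (D : nat -> nat -> Cn -> Cx) (a b : nat) (z : Cn) : Cx :=
  Csub (D b a z) (D a b z).

(* (a,b)-coefficient of the wedge  (sum f_i dz_i) /\ (sum g_i dz_i) *)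
Definition wedge11 (f g : nat -> Cn -> Cx) (a b : nat) (z : Cn) : Cx :=
  Csub (Cmul (f a z) (g b z)) (Cmul (f b z) (g a z)).

(* coefficient of dz_a/\dz_b/\dz_c/\dz_d (a<b<c<d) in al /\ be, for 2-forms
   given by full antisymmetric coefficient matrices al, be at a point *)
Definition wedge22 (al be : nat -> nat -> Cx) (a b c d : nat) : Cx :=
  Cadd (Cadd (Cadd (Cadd (Cadd
    (Cmul (al a b) (be c d))
    (Copp (Cmul (al a c) (be b d))))
    (Cmul (al a d) (be b c)))
    (Cmul (al b c) (be a d)))
    (Copp (Cmul (al b d) (be a c))))
    (Cmul (al c d) (be a b)).

(* Integrability of a 2-form (q = 2 case of the definition in the paper):
   every point p outside the zero set has a neighbourhood (an open ball) V
   with holomorphic 1-forms w1, w2 on V with eta|V = w1 /\ w2 and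
   d wj /\ eta = 0. Holomorphy of the coefficients of wj is expressed by the
   existence of complex derivatives Dj at every point of V. *)
Definition integrable2 (n : nat) (E : nat -> nat -> Cn -> Cx) : Prop :=
  forall p : Cn,
    (exists a b, (a < b < n)%nat /\ E a b p <> C0) ->
    exists r : R, (r > 0)%R /\
    exists (f1 f2 : nat -> Cn -> Cx) (D1 D2 : nat -> nat -> Cn -> Cx),
      (forall z, in_ball n p r z -> forall i, (i < n)%nat ->
          has_cderiv n (f1 i) z (fun k => D1 i k z) /\
          has_cderiv n (f2 i) z (fun k => D2 i k z)) /\
      (forall z, in_ball n p r z -> forall a b, (a < b < n)%nat ->
          E a b z = wedge11 f1 f2 a b z) /\
      (forall z, in_ball n p r z -> forall a b c d, (a < b < c)%nat -> (c < d < n)%nat ->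
          wedge22 (fun i j => full2 (d1form D1) i j z) (fun i j => full2 E i j z) a b c d = C0 /\
          wedge22 (fun i j => full2 (d1form D2) i j z) (fun i j => full2 E i j z) a b c d = C0).

(* eta = sum_{a<b<n} (sum_{k<n} c a b k z_k) dz_a /\ dz_b *)
Definition eta_lin (n : nat) (c : nat -> nat -> nat -> Cx) (a b : nat) (z : Cn) : Cx :=
  Csum n (fun k => Cmul (c a b k) (z k)).

(* coefficient of dz_a/\dz_b/\dz_e (a<b<e) in d eta (a constant):
   d_a E_be - d_b E_ae + d_e E_ab *)
Definition d_eta_lin (c : nat -> nat -> nat -> Cx) (a b e : nat) : Cx :=
  Cadd (Csub (c b e a) (c a e b)) (c a b e).

Definition coordX (n : nat) (P : nat -> nat -> Cx) (i : nat) (z : Cn) : Cx :=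
  Csum n (fun k => Cmul (P i k) (z k)).

(* z-coefficient (a<b) of the 2-form  sum_{k,j<m} T k j dx_k /\ dx_j *)
Definition pull2 (m : nat) (P : nat -> nat -> Cx) (T : nat -> nat -> Cx) (a b : nat) : Cx :=
  Csum m (fun k => Csum m (fun j =>
    Cmul (T k j) (Csub (Cmul (P k a) (P j b)) (Cmul (P k b) (P j a))))).

(* z-coefficient of dx_1 /\ dx_2 /\ dx_3 (indices 0,1,2) on dz_a/\dz_b/\dz_e *)
Definition det3 (P : nat -> nat -> Cx) (a b e : nat) : Cx :=
  Cadd (Csub
    (Cmul (P 0%nat a) (Csub (Cmul (P 1%nat b) (P 2%nat e)) (Cmul (P 1%nat e) (P 2%nat b))))
    (Cmul (P 0%nat b) (Csub (Cmul (P 1%nat a) (P 2%nat e)) (Cmul (P 1%nat e) (P 2%nat a)))))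
    (Cmul (P 0%nat e) (Csub (Cmul (P 1%nat a) (P 2%nat b)) (Cmul (P 1%nat b) (P 2%nat a)))).

(* A_j(x1,x2,x3) = sum_{u,v<3} q j u v x_u x_v  (homogeneous quadratic);
   partial derivative in x_k : sum_{v<3} (q j k v + q j v k) x_v *)
Definition dA (q : nat -> nat -> nat -> Cx) (x : nat -> Cx) (j k : nat) : Cx :=
  Csum 3 (fun v => Cmul (Cadd (q j k v) (q j v k)) (x v)).

(* coefficients T k j (x) of  x1 dx2/\dx3 + d alpha,
   alpha = sum_{j<3} A_j dx_j, d alpha = sum_{k,j<3} dA_j/dx_k dx_k /\ dx_j *)
Definition T_normal (q : nat -> nat -> nat -> Cx) (x : nat -> Cx) (k j : nat) : Cx :=
  Cadd (if andb (Nat.eqb k 1) (Nat.eqb j 2) then x 0%nat else C0)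
       (if andb (Nat.ltb k 3) (Nat.ltb j 3) then dA q x j k else C0).

(* Main.v *)
Require Import Defs.
From Stdlib Require Import Reals Lra Lia Field Ring.
From Coquelicot Require Complex.

Definition C1 : Cx := (1%R, 0%R).
Definition Cinv (x : Cx) : Cx :=
  (fst x / (fst x ^ 2 + snd x ^ 2), - snd x / (fst x ^ 2 + snd x ^ 2))%R.
Definition Cdiv (x y : Cx) : Cx := Cmul x (Cinv y).

Lemma Cx_ring : ring_theory C0 C1 Cadd Cmul Csub Copp (@eq Cx).
Proof.
  constructor; intros; repeat match goal with x : Cx |- _ => destruct x end;
  unfold Cadd, Cmul, Csub, Copp, C0, C1; simpl; apply injective_projections; simpl; ring.
Qed.

Lemma C1_neq_C0 : C1 <> C0.
Proof. unfold C1, C0; intro H; injection H; lra. Qed.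

Lemma Cx_field : field_theory C0 C1 Cadd Cmul Csub Copp Cdiv Cinv (@eq Cx).
Proof.
  constructor.
  - exact Cx_ring.
  - exact C1_neq_C0.
  - reflexivity.
  - intros [a b] H. unfold Cinv, Cmul, C1; simpl.
    assert (Hn : (a ^ 2 + b ^ 2 <> 0)%R).
    { intro H0. apply H. unfold C0.
      assert (a = 0 /\ b = 0)%R as [-> ->] by nra. reflexivity. }
    apply injective_projections; simpl; field; simpl in Hn; rewrite !Rmult_1_r in Hn; auto.
Qed.

Add Field CxF : Cx_field.

Lemma test (x y : Cx) : y <> C0 -> Cmul (Cdiv x y) y = x.
Proof. intros. field. auto. Qed.

Lemma Csum_ext n f g : (forall k, (k < n)%nat -> f k = g k) -> Csum n f = Csum n g.
Proof.
  induction n; intros H; simpl; auto.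
  rewrite IHn by (intros; apply H; lia). rewrite H by lia. reflexivity.
Qed.

Lemma Csum_add n f g : Csum n (fun k => Cadd (f k) (g k)) = Cadd (Csum n f) (Csum n g).
Proof. induction n; simpl. - ring. - rewrite IHn. ring. Qed.

Lemma Csum_sub n f g : Csum n (fun k => Csub (f k) (g k)) = Csub (Csum n f) (Csum n g).
Proof. induction n; simpl. - ring. - rewrite IHn. ring. Qed.

Lemma Csum_scal n a f : Csum n (fun k => Cmul a (f k)) = Cmul a (Csum n f).
Proof. induction n; simpl. - ring. - rewrite IHn. ring. Qed.

Lemma Csum_zero n f : (forall k, (k < n)%nat -> f k = C0) -> Csum n f = C0.
Proof.
  induction n; intros H; simpl; auto.
  rewrite IHn by (intros; apply H; lia). rewrite H by lia. ring.
Qed.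

Lemma Csum_remove n f m : (m < n)%nat ->
  Csum n f = Cadd (f m) (Csum n (fun k => if Nat.eqb k m then C0 else f k)).
Proof.
  induction n; intros Hm; [lia|]. simpl.
  destruct (Nat.eq_dec m n) as [->|Hne].
  - rewrite Nat.eqb_refl.
    rewrite (Csum_ext n (fun k => if Nat.eqb k n then C0 else f k) f).
    + ring.
    + intros k Hk. destruct (Nat.eqb_spec k n); [lia|auto].
  - rewrite IHn by lia. destruct (Nat.eqb_spec n m); [lia|]. ring.
Qed.

Lemma Csum_point n f m : (m < n)%nat -> (forall k, (k < n)%nat -> k <> m -> f k = C0) ->
  Csum n f = f m.
Proof.
  intros Hm H. rewrite (Csum_remove n f m Hm).
  rewrite Csum_zero. - ring.
  - intros k Hk. destruct (Nat.eqb_spec k m); auto.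
Qed.

Definition evec (k : nat) (t : Cx) : Cn := fun i => if Nat.eqb i k then t else C0.

Lemma Csum_evec n a k t : (k < n)%nat -> Csum n (fun j => Cmul (a j) (evec k t j)) = Cmul (a k) t.
Proof.
  intros Hk. rewrite (Csum_point _ _ k Hk).
  - unfold evec. rewrite Nat.eqb_refl. reflexivity.
  - intros j _ Hj. unfold evec. destruct (Nat.eqb_spec j k); [lia|]. ring.
Qed.

Lemma Cnorm_tri x y : (Cnorm (Cadd x y) <= Cnorm x + Cnorm y)%R.
Proof. exact (Complex.Cmod_triangle x y). Qed.
Lemma Cnorm_mul x y : Cnorm (Cmul x y) = (Cnorm x * Cnorm y)%R.
Proof. exact (Complex.Cmod_mult x y). Qed.
Lemma Cnorm_opp x : Cnorm (Copp x) = Cnorm x.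
Proof. exact (Complex.Cmod_opp x). Qed.
Lemma Cnorm_nonneg x : (0 <= Cnorm x)%R.
Proof. exact (Complex.Cmod_ge_0 x). Qed.
Lemma Cnorm_C0 : Cnorm C0 = 0%R.
Proof. exact Complex.Cmod_0. Qed.
Lemma Cnorm_eq0 x : Cnorm x = 0%R -> x = C0.
Proof. exact (Complex.Cmod_eq_0 x). Qed.
Lemma Cnorm_real t : Cnorm (t, 0%R) = Rabs t.
Proof. exact (Complex.Cmod_R t). Qed.
Lemma Cnorm_sub x y : (Cnorm (Csub x y) <= Cnorm x + Cnorm y)%R.
Proof. unfold Csub. rewrite <- (Cnorm_opp y). apply Cnorm_tri. Qed.

Lemma vnorm_nonneg n z : (0 <= vnorm n z)%R.
Proof. induction n; simpl; [lra|]. apply Rle_trans with (vnorm n z); auto. apply Rmax_l. Qed.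

Lemma vnorm_ge n z i : (i < n)%nat -> (Cnorm (z i) <= vnorm n z)%R.
Proof.
  induction n; intros H; [lia|]. simpl.
  destruct (Nat.eq_dec i n) as [->|]. - apply Rmax_r.
  - apply Rle_trans with (vnorm n z). apply IHn; lia. apply Rmax_l.
Qed.

Lemma vnorm_le n z M : (0 <= M)%R -> (forall i, (i < n)%nat -> (Cnorm (z i) <= M)%R) ->
  (vnorm n z <= M)%R.
Proof.
  induction n; intros HM H; simpl; auto.
  apply Rmax_lub. apply IHn; auto. apply H; lia.
Qed.

Fixpoint Fn (n : nat) (F : nat -> Cx) : R :=
  match n with O => 0%R | S m => (Fn m F + Cnorm (F m))%R end.

Lemma Fn_nonneg n F : (0 <= Fn n F)%R.
Proof. induction n; simpl; [lra|]. pose proof (Cnorm_nonneg (F n)). lra. Qed.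

Lemma Csum_bound n F h :
  (Cnorm (Csum n (fun k => Cmul (F k) (h k))) <= Fn n F * vnorm n h)%R.
Proof.
  induction n; simpl.
  - rewrite Cnorm_C0. lra.
  - eapply Rle_trans. apply Cnorm_tri. rewrite Cnorm_mul.
    assert (H1 : (vnorm n h <= Rmax (vnorm n h) (Cnorm (h n)))%R) by apply Rmax_l.
    assert (H2 : (Cnorm (h n) <= Rmax (vnorm n h) (Cnorm (h n)))%R) by apply Rmax_r.
    pose proof (Fn_nonneg n F). pose proof (Cnorm_nonneg (F n)).
    pose proof (vnorm_nonneg n h).
    apply Rle_trans with (Fn n F * vnorm n h + Cnorm (F n) * Cnorm (h n))%R.
    + lra.
    + nra.
Qed.

Lemma Csum_lin2 n (F G : nat -> Cx) (g f : Cx) (h : Cn) :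
  Csum n (fun k => Cmul (Cadd (Cmul (F k) g) (Cmul f (G k))) (h k)) =
  Cadd (Cmul (Csum n (fun k => Cmul (F k) (h k))) g) (Cmul f (Csum n (fun k => Cmul (G k) (h k)))).
Proof.
  induction n; simpl. - ring. - rewrite IHn. ring.
Qed.

Lemma norm6 (x1 x2 x3 x4 x5 x6 : Cx) :
  (Cnorm (Cadd (Cadd (Cadd (Cadd (Cadd x1 x2) x3) x4) x5) x6) <=
   Cnorm x1 + Cnorm x2 + Cnorm x3 + Cnorm x4 + Cnorm x5 + Cnorm x6)%R.
Proof.
  repeat (eapply Rle_trans; [apply Cnorm_tri|]).
  pose proof (Cnorm_tri x1 x2). pose proof (Cnorm_tri (Cadd x1 x2) x3).
  pose proof (Cnorm_tri (Cadd (Cadd x1 x2) x3) x4).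
  pose proof (Cnorm_tri (Cadd (Cadd (Cadd x1 x2) x3) x4) x5). lra.
Qed.

Lemma cderiv_mul n f g z F G :
  has_cderiv n f z F -> has_cderiv n g z G ->
  has_cderiv n (fun y => Cmul (f y) (g y)) z
    (fun k => Cadd (Cmul (F k) (g z)) (Cmul (f z) (G k))).
Proof.
  intros Hf Hg eps Heps.
  set (K := (Cnorm (g z) + Cnorm (f z) + Fn n F + Fn n G + 1)%R).
  assert (HK : (1 <= K)%R).
  { unfold K. pose proof (Cnorm_nonneg (g z)). pose proof (Cnorm_nonneg (f z)).
    pose proof (Fn_nonneg n F). pose proof (Fn_nonneg n G). lra. }
  set (e' := Rmin 1 (eps / (4 * K * K))).
  assert (He'1 : (e' <= 1)%R) by apply Rmin_l.
  assert (He'2 : (e' <= eps / (4 * K * K))%R) by apply Rmin_r.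
  assert (He'0 : (0 < e')%R).
  { unfold e'. apply Rmin_glb_lt. lra. apply Rdiv_lt_0_compat. lra. nra. }
  destruct (Hf e' He'0) as [df [Hdf Hf']].
  destruct (Hg e' He'0) as [dg [Hdg Hg']].
  set (d := Rmin (Rmin df dg) (Rmin 1 (eps / (4 * K * K)))).
  assert (Hd0 : (0 < d)%R).
  { assert (0 < eps / (4 * K * K))%R by (apply Rdiv_lt_0_compat; [lra|nra]).
    unfold d. apply Rmin_glb_lt; apply Rmin_glb_lt; lra. }
  exists d. split; [lra|].
  intros h Hh Hnh.
  assert (Hdf' : (vnorm n h < df)%R).
  { apply Rlt_le_trans with d; auto. unfold d. eapply Rle_trans; apply Rmin_l. }
  assert (Hdg' : (vnorm n h < dg)%R).
  { apply Rlt_le_trans with d; auto. unfold d. eapply Rle_trans. apply Rmin_l. apply Rmin_r. }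
  assert (Ht1 : (vnorm n h <= 1)%R).
  { apply Rle_trans with d; [lra|]. unfold d. eapply Rle_trans. apply Rmin_r. apply Rmin_l. }
  assert (Ht2 : (vnorm n h <= eps / (4 * K * K))%R).
  { apply Rle_trans with d; [lra|]. unfold d. eapply Rle_trans. apply Rmin_r. apply Rmin_r. }
  specialize (Hf' h Hh Hdf'). specialize (Hg' h Hh Hdg').
  rewrite Csum_lin2.
  set (Lf := Csum n (fun k => Cmul (F k) (h k))) in *.
  set (Lg := Csum n (fun k => Cmul (G k) (h k))) in *.
  set (a := Csub (Csub (f (vadd z h)) (f z)) Lf) in *.
  set (b := Csub (Csub (g (vadd z h)) (g z)) Lg) in *.
  assert (E1 : f (vadd z h) = Cadd (Cadd (f z) Lf) a) by (unfold a; ring).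
  assert (E2 : g (vadd z h) = Cadd (Cadd (g z) Lg) b) by (unfold b; ring).
  rewrite E1, E2.
  set (t := vnorm n h) in *.
  assert (Ht0 : (0 <= t)%R) by apply vnorm_nonneg.
  assert (HLf : (Cnorm Lf <= Fn n F * t)%R) by apply Csum_bound.
  assert (HLg : (Cnorm Lg <= Fn n G * t)%R) by apply Csum_bound.
  replace (Csub (Csub (Cmul (Cadd (Cadd (f z) Lf) a) (Cadd (Cadd (g z) Lg) b)) (Cmul (f z) (g z)))
           (Cadd (Cmul Lf (g z)) (Cmul (f z) Lg)))
    with (Cadd (Cadd (Cadd (Cadd (Cadd (Cmul (f z) b) (Cmul Lf Lg)) (Cmul Lf b)) (Cmul a (g z)))
           (Cmul a Lg)) (Cmul a b)) by ring.
  eapply Rle_trans. apply norm6. rewrite !Cnorm_mul.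
  pose proof (Cnorm_nonneg (f z)). pose proof (Cnorm_nonneg (g z)).
  pose proof (Cnorm_nonneg a). pose proof (Cnorm_nonneg b).
  pose proof (Cnorm_nonneg Lf). pose proof (Cnorm_nonneg Lg).
  pose proof (Fn_nonneg n F). pose proof (Fn_nonneg n G).
  set (nf := Cnorm (f z)) in *. set (ng := Cnorm (g z)) in *.
  set (na := Cnorm a) in *. set (nb := Cnorm b) in *.
  set (nLf := Cnorm Lf) in *. set (nLg := Cnorm Lg) in *.
  set (MF := Fn n F) in *. set (MG := Fn n G) in *.
  assert (B1 : (nf * nb <= nf * (e' * t))%R) by (apply Rmult_le_compat_l; lra).
  assert (B2 : (nLf * nLg <= (MF * t) * (MG * t))%R) by (apply Rmult_le_compat; lra).
  assert (B3 : (nLf * nb <= (MF * t) * (e' * t))%R) by (apply Rmult_le_compat; lra).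
  assert (B4 : (na * ng <= (e' * t) * ng)%R) by (apply Rmult_le_compat_r; lra).
  assert (B5 : (na * nLg <= (e' * t) * (MG * t))%R) by (apply Rmult_le_compat; lra).
  assert (B6 : (na * nb <= (e' * t) * (e' * t))%R) by (apply Rmult_le_compat; nra).
  assert (S1 : (nf * (e' * t) + (e' * t) * ng + (MF * t) * (e' * t) + (e' * t) * (MG * t)
               + (e' * t) * (e' * t) <= e' * K * t)%R).
  { unfold K. fold nf ng MF MG.
    assert (0 <= MF * e' * t)%R by (repeat apply Rmult_le_pos; lra).
    assert (0 <= MG * e' * t)%R by (repeat apply Rmult_le_pos; lra).
    assert (0 <= e' * t)%R by (repeat apply Rmult_le_pos; lra).
    assert (MF * t * (e' * t) <= MF * e' * t)%R.
    { replace (MF * t * (e' * t))%R with ((MF * e' * t) * t)%R by ring.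
      rewrite <- (Rmult_1_r (MF * e' * t)) at 2. apply Rmult_le_compat_l; lra. }
    assert (e' * t * (MG * t) <= MG * e' * t)%R.
    { replace (e' * t * (MG * t))%R with ((MG * e' * t) * t)%R by ring.
      rewrite <- (Rmult_1_r (MG * e' * t)) at 2. apply Rmult_le_compat_l; lra. }
    assert (e' * t * (e' * t) <= e' * t)%R.
    { rewrite <- (Rmult_1_r (e' * t)) at 3. apply Rmult_le_compat_l; nra. }
    nra. }
  assert (S2 : (MF * t * (MG * t) <= K * K * t * t)%R).
  { assert (MF <= K)%R by (unfold K; fold MF; lra).
    assert (MG <= K)%R by (unfold K; fold MG; lra).
    assert (MF * MG <= K * K)%R by nra. nra. }
  assert (S3 : (e' * K <= eps / 4)%R).
  { apply Rle_trans with (eps / (4 * K * K) * K)%R. nra.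
    replace (eps / (4 * K * K) * K)%R with (eps / 4 / K)%R by (field; lra).
    unfold Rdiv. rewrite <- (Rmult_1_r (eps * / 4)) at 2. apply Rmult_le_compat_l. lra.
    rewrite <- Rinv_1. apply Rinv_le_contravar; lra. }
  assert (S4 : (K * K * t <= eps / 4)%R).
  { apply Rle_trans with (K * K * (eps / (4 * K * K)))%R. nra. right. field. lra. }
  nra.
Qed.

Lemma cderiv_sub n f g z F G :
  has_cderiv n f z F -> has_cderiv n g z G ->
  has_cderiv n (fun y => Csub (f y) (g y)) z (fun k => Csub (F k) (G k)).
Proof.
  intros Hf Hg eps Heps.
  destruct (Hf (eps/2)%R ltac:(lra)) as [df [Hdf Hf']].
  destruct (Hg (eps/2)%R ltac:(lra)) as [dg [Hdg Hg']].
  exists (Rmin df dg). split. apply Rmin_glb_lt; lra.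
  intros h Hh Hn.
  specialize (Hf' h Hh (Rlt_le_trans _ _ _ Hn (Rmin_l _ _))).
  specialize (Hg' h Hh (Rlt_le_trans _ _ _ Hn (Rmin_r _ _))).
  rewrite (Csum_ext n _ (fun k => Csub (Cmul (F k) (h k)) (Cmul (G k) (h k)))) by (intros; ring).
  rewrite Csum_sub.
  replace (Csub (Csub (Csub (f (vadd z h)) (g (vadd z h))) (Csub (f z) (g z)))
       (Csub (Csum n (fun k => Cmul (F k) (h k))) (Csum n (fun k => Cmul (G k) (h k)))))
   with (Csub (Csub (Csub (f (vadd z h)) (f z)) (Csum n (fun k => Cmul (F k) (h k))))
              (Csub (Csub (g (vadd z h)) (g z)) (Csum n (fun k => Cmul (G k) (h k))))) by ring.
  eapply Rle_trans. apply Cnorm_sub. lra.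
Qed.

Lemma vnorm_evec n k x : (k < n)%nat -> vnorm n (evec k x) = Cnorm x.
Proof.
  intros Hk. apply Rle_antisym.
  - apply vnorm_le. apply Cnorm_nonneg. intros i _. unfold evec.
    destruct (Nat.eqb_spec i k). lra. rewrite Cnorm_C0. apply Cnorm_nonneg.
  - pose proof (vnorm_ge n (evec k x) k Hk). unfold evec in H at 1.
    rewrite Nat.eqb_refl in H. exact H.
Qed.

Lemma cderiv_lin_unique n g G p r z (Lc : nat -> Cx) :
  in_ball n p r z -> has_cderiv n g z G ->
  (forall y, in_ball n p r y -> g y = Csum n (fun k => Cmul (Lc k) (y k))) ->
  forall k, (k < n)%nat -> G k = Lc k.
Proof.
  intros Hz Hg Hlin k Hk.
  destruct (Req_dec (Cnorm (Csub (G k) (Lc k))) 0) as [H0|H0].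
  { apply Cnorm_eq0 in H0. transitivity (Cadd (Csub (G k) (Lc k)) (Lc k)). ring.
    rewrite H0. ring. }
  exfalso. set (nd := Cnorm (Csub (G k) (Lc k))) in *.
  assert (Hnd : (0 < nd)%R) by (pose proof (Cnorm_nonneg (Csub (G k) (Lc k))); fold nd in H; lra).
  destruct (Hg (nd/2)%R ltac:(lra)) as [dl [Hdl Hg']].
  unfold in_ball in Hz.
  set (m := vnorm n (vsub z p)) in *.
  set (t := Rmin (dl/2) ((r - m)/2)).
  assert (Ht : (0 < t)%R) by (apply Rmin_glb_lt; lra).
  set (h := evec k (t, 0%R)).
  assert (Hh0 : forall i, (n <= i)%nat -> h i = C0).
  { intros i Hi. unfold h, evec. destruct (Nat.eqb_spec i k); [lia|auto]. }
  assert (Hnh : vnorm n h = t).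
  { unfold h. rewrite vnorm_evec by auto. rewrite Cnorm_real. apply Rabs_pos_eq. lra. }
  assert (Hin : in_ball n p r (vadd z h)).
  { unfold in_ball. apply Rle_lt_trans with (m + t)%R.
    - apply vnorm_le. assert (0 <= m)%R by apply vnorm_nonneg. lra.
      intros i Hi. replace (vsub (vadd z h) p i) with (Cadd (vsub z p i) (h i))
        by (unfold vsub, vadd; ring).
      eapply Rle_trans. apply Cnorm_tri.
      assert (Cnorm (vsub z p i) <= m)%R by (apply vnorm_ge; auto).
      pose proof (vnorm_ge n h i Hi). lra.
    - assert (t <= (r - m) / 2)%R by apply Rmin_r. lra. }
  assert (Hlt : (vnorm n h < dl)%R).
  { rewrite Hnh. assert (t <= dl / 2)%R by apply Rmin_l. lra. }
  specialize (Hg' h Hh0 Hlt). rewrite Hnh in Hg'.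
  rewrite (Hlin _ Hin), (Hlin _ Hz) in Hg'.
  rewrite <- Csum_sub in Hg'.
  rewrite (Csum_ext n _ (fun j => Cmul (Lc j) (h j))) in Hg' by (intros; unfold vadd; ring).
  unfold h in Hg'. rewrite !Csum_evec in Hg' by auto.
  replace (Csub (Cmul (Lc k) (t, 0%R)) (Cmul (G k) (t, 0%R)))
    with (Copp (Cmul (Csub (G k) (Lc k)) (t, 0%R))) in Hg' by ring.
  rewrite Cnorm_opp, Cnorm_mul, Cnorm_real, Rabs_pos_eq in Hg' by lra.
  fold nd in Hg'. nra.
Qed.

Lemma lin_zero_ball n p r (l : nat -> Cx) : (r > 0)%R ->
  (forall y, in_ball n p r y -> Csum n (fun k => Cmul (l k) (y k)) = C0) ->
  forall k, (k < n)%nat -> l k = C0.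
Proof.
  intros Hr H k Hk.
  assert (Hp : in_ball n p r p).
  { unfold in_ball. apply Rle_lt_trans with 0%R; [|lra]. apply vnorm_le. lra.
    intros i _. unfold vsub, Csub, Cadd, Copp. simpl.
    replace (fst (p i) + - fst (p i))%R with 0%R by ring.
    replace (snd (p i) + - snd (p i))%R with 0%R by ring. fold C0. rewrite Cnorm_C0. lra. }
  symmetry. apply (cderiv_lin_unique n (fun _ => C0) (fun _ => C0) p r p l Hp).
  - intros eps Heps. exists 1%R. split. lra. intros h _ _.
    rewrite Csum_zero by (intros; ring).
    replace (Csub (Csub C0 C0) C0) with C0 by ring. rewrite Cnorm_C0.
    pose proof (vnorm_nonneg n h). nra.
  - intros y Hy. symmetry. apply H. auto.
  - auto.
Qed.

Definition Cf (c : nat -> nat -> nat -> Cx) (i j k : nat) : Cx :=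
  if Nat.ltb i j then c i j k else if Nat.ltb j i then Copp (c j i k) else C0.
Definition Om (c : nat -> nat -> nat -> Cx) (i j k : nat) : Cx :=
  Cadd (Csub (Cf c j k i) (Cf c i k j)) (Cf c i j k).
Definition Qexpr (om : nat -> nat -> nat -> Cx) (xi : nat -> Cx) (a b cc d : nat) : Cx :=
  Csub (Cadd (Csub (Cmul (xi a) (om b cc d)) (Cmul (xi b) (om a cc d)))
     (Cmul (xi cc) (om a b d))) (Cmul (xi d) (om a b cc)).

Lemma Cf_lt c i j k : (i < j)%nat -> Cf c i j k = c i j k.
Proof. intros H. unfold Cf. destruct (Nat.ltb_spec i j); [auto|lia]. Qed.
Lemma Cf_anti c i j k : Cf c j i k = Copp (Cf c i j k).
Proof.
  unfold Cf. destruct (Nat.ltb_spec j i), (Nat.ltb_spec i j); try lia; try ring.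
Qed.
Lemma Cf_diag c i k : Cf c i i k = C0.
Proof. unfold Cf. rewrite Nat.ltb_irrefl. reflexivity. Qed.
Lemma Om_swap12 c i j k : Om c j i k = Copp (Om c i j k).
Proof. unfold Om. rewrite (Cf_anti c j i k). ring. Qed.
Lemma Om_swap23 c i j k : Om c i k j = Copp (Om c i j k).
Proof. unfold Om. rewrite (Cf_anti c k j i), (Cf_anti c j k i). ring. Qed.
Lemma Om_rep12 c i k : Om c i i k = C0.
Proof. unfold Om. rewrite Cf_diag. ring. Qed.
Lemma Om_rep23 c i k : Om c i k k = C0.
Proof. unfold Om. rewrite Cf_diag. ring. Qed.
Lemma Om_rep13 c i k : Om c i k i = C0.
Proof. unfold Om. rewrite (Cf_anti c i k i), Cf_diag. ring. Qed.
Lemma Om_sorted c i j k : (i < j)%nat -> (j < k)%nat -> Om c i j k = d_eta_lin c i j k.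
Proof. intros. unfold Om, d_eta_lin. rewrite !Cf_lt by lia. reflexivity. Qed.

Lemma full2_lt E i j (z : Cn) : (i < j)%nat -> full2 E i j z = E i j z.
Proof. intros H. unfold full2. destruct (Nat.ltb_spec i j); [auto|lia]. Qed.

Lemma Q_identity n (c : nat -> nat -> nat -> Cx) (F1 F2 : nat -> Cx) (D1 D2 : nat -> nat -> Cx)
  a b cc d :
  (a < b)%nat -> (b < cc)%nat -> (cc < d)%nat -> (d < n)%nat ->
  (forall x y k, (x < y < n)%nat -> (k < n)%nat ->
     c x y k = Csub (Cadd (Cmul (D1 x k) (F2 y)) (Cmul (F1 x) (D2 y k)))
                    (Cadd (Cmul (D1 y k) (F2 x)) (Cmul (F1 y) (D2 x k)))) ->
  Qexpr (Om c) F1 a b cc d =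
    wedge22 (fun i j => Csub (D1 j i) (D1 i j))
            (fun i j => Csub (Cmul (F1 i) (F2 j)) (Cmul (F1 j) (F2 i))) a b cc d /\
  Qexpr (Om c) F2 a b cc d =
    wedge22 (fun i j => Csub (D2 j i) (D2 i j))
            (fun i j => Csub (Cmul (F1 i) (F2 j)) (Cmul (F1 j) (F2 i))) a b cc d.
Proof.
  intros H1 H2 H3 H4 Hc. unfold Qexpr, Om, wedge22.
  rewrite !Cf_lt by lia. rewrite !Hc by lia. split; ring.
Qed.

Lemma analytic n c p : integrable2 n (eta_lin n c) ->
  (exists a b, (a < b < n)%nat /\ eta_lin n c a b p <> C0) ->
  exists r, (r > 0)%R /\ exists f1 f2 : nat -> Cn -> Cx, forall z, in_ball n p r z ->
   (forall a b, (a < b < n)%nat -> eta_lin n c a b z = wedge11 f1 f2 a b z) /\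
   (forall a b cc d, (a < b)%nat -> (b < cc)%nat -> (cc < d)%nat -> (d < n)%nat ->
      Qexpr (Om c) (fun i => f1 i z) a b cc d = C0 /\
      Qexpr (Om c) (fun i => f2 i z) a b cc d = C0).
Proof.
  intros Hint Hp.
  destruct (Hint p Hp) as [r [Hr [f1 [f2 [D1 [D2 [Hder [Heq Hw]]]]]]]].
  exists r. split; auto. exists f1, f2. intros z Hz. split.
  { intros a b Hab. apply Heq; auto. }
  assert (Hc : forall x y k, (x < y < n)%nat -> (k < n)%nat ->
     c x y k = Csub (Cadd (Cmul (D1 x k z) (f2 y z)) (Cmul (f1 x z) (D2 y k z)))
                    (Cadd (Cmul (D1 y k z) (f2 x z)) (Cmul (f1 y z) (D2 x k z)))).
  { intros x y k Hxy Hk.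
    assert (Hd : has_cderiv n (wedge11 f1 f2 x y) z
      (fun k => Csub (Cadd (Cmul (D1 x k z) (f2 y z)) (Cmul (f1 x z) (D2 y k z)))
                    (Cadd (Cmul (D1 y k z) (f2 x z)) (Cmul (f1 y z) (D2 x k z))))).
    { unfold wedge11. apply cderiv_sub; apply cderiv_mul; apply Hder; auto; lia. }
    symmetry. apply (cderiv_lin_unique n _ _ p r z (c x y) Hz Hd); auto.
    intros y' Hy'. rewrite <- (Heq y' Hy' x y Hxy). reflexivity. }
  intros a b cc d H1 H2 H3 H4.
  destruct (Q_identity n c (fun i => f1 i z) (fun i => f2 i z) (fun i k => D1 i k z)
             (fun i k => D2 i k z) a b cc d H1 H2 H3 H4 Hc) as [Q1 Q2].
  destruct (Hw z Hz a b cc d ltac:(lia) ltac:(lia)) as [W1 W2].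
  unfold wedge22 in *. rewrite !full2_lt in W1, W2 by lia.
  unfold d1form in W1, W2. rewrite !(Heq z Hz) in W1, W2 by lia. unfold wedge11 in W1, W2.
  rewrite Q1, Q2. split; [exact W1 | exact W2].
Qed.

Lemma lin_close (A B X : Cx) : X = C0 -> (Csub A B = X \/ Csub A B = Copp X) -> A = B.
Proof.
  intros HX [H|H]; rewrite HX in H;
  [transitivity (Cadd (Csub A B) B); [ring|rewrite H; ring]|].
  transitivity (Cadd (Csub A B) B); [ring|rewrite H; ring].
Qed.

Lemma V_member n c s1 s2 s3 (xi : nat -> Cx) :
  (s1 < s2)%nat -> (s2 < s3)%nat -> (s3 < n)%nat ->
  (forall a b cc d, (a < b)%nat -> (b < cc)%nat -> (cc < d)%nat -> (d < n)%nat ->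
      Qexpr (Om c) xi a b cc d = C0) ->
  forall k, (k < n)%nat ->
  Cmul (Om c s1 s2 s3) (xi k) =
  Cadd (Cadd (Cmul (xi s1) (Om c k s2 s3)) (Cmul (xi s2) (Om c s1 k s3)))
       (Cmul (xi s3) (Om c s1 s2 k)).
Proof.
  intros H1 H2 H3 HQ k Hk.
  destruct (Nat.lt_trichotomy k s1) as [L1|[E1|G1]].
  - pose proof (HQ k s1 s2 s3 L1 H1 H2 H3) as H. unfold Qexpr in H.
    rewrite (Om_swap12 c s1 k s3), (Om_swap12 c s1 k s2), (Om_swap23 c s1 s2 k) in H.
    apply (lin_close _ _ _ H); (left; ring) || (right; ring).
  - subst k. rewrite Om_rep12, Om_rep13. ring.
  - destruct (Nat.lt_trichotomy k s2) as [L2|[E2|G2]].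
    + pose proof (HQ s1 k s2 s3 G1 L2 H2 H3) as H. unfold Qexpr in H.
      rewrite (Om_swap23 c s1 s2 k) in H.
      apply (lin_close _ _ _ H); (left; ring) || (right; ring).
    + subst k. rewrite Om_rep12, Om_rep23. ring.
    + destruct (Nat.lt_trichotomy k s3) as [L3|[E3|G3]].
      * pose proof (HQ s1 s2 k s3 H1 G2 L3 H3) as H. unfold Qexpr in H.
        rewrite (Om_swap12 c s2 k s3).
        apply (lin_close _ _ _ H); (left; ring) || (right; ring).
      * subst k. rewrite Om_rep13, Om_rep23. ring.
      * pose proof (HQ s1 s2 s3 k H1 H2 G3 Hk) as H. unfold Qexpr in H.
        rewrite (Om_swap12 c s2 k s3), (Om_swap23 c s2 s3 k), (Om_swap23 c s1 s3 k).
        apply (lin_close _ _ _ H); (left; ring) || (right; ring).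
Qed.

Lemma Cmul_cancel (W A B : Cx) : W <> C0 -> Cmul W A = Cmul W B -> A = B.
Proof.
  intros HW H. transitivity (Cmul (Cinv W) (Cmul W A)). field; auto.
  rewrite H. field; auto.
Qed.

Lemma hc_alg (W a1 a2 a3 b1 b2 b3 ui vi wi uj vj wj x1i x1j x2i x2j : Cx) : W <> C0 ->
  Cmul W x1i = Cadd (Cadd (Cmul a1 ui) (Cmul a2 vi)) (Cmul a3 wi) ->
  Cmul W x1j = Cadd (Cadd (Cmul a1 uj) (Cmul a2 vj)) (Cmul a3 wj) ->
  Cmul W x2i = Cadd (Cadd (Cmul b1 ui) (Cmul b2 vi)) (Cmul b3 wi) ->
  Cmul W x2j = Cadd (Cadd (Cmul b1 uj) (Cmul b2 vj)) (Cmul b3 wj) ->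
  Cmul (Cmul W W) (Csub (Cmul x1i x2j) (Cmul x1j x2i)) =
  Cadd (Cadd (Cmul (Csub (Cmul a1 b2) (Cmul a2 b1)) (Csub (Cmul ui vj) (Cmul uj vi)))
             (Cmul (Csub (Cmul a1 b3) (Cmul a3 b1)) (Csub (Cmul ui wj) (Cmul uj wi))))
       (Cmul (Csub (Cmul a2 b3) (Cmul a3 b2)) (Csub (Cmul vi wj) (Cmul vj wi))).
Proof.
  intros HW E1 E2 E3 E4.
  transitivity (Csub (Cmul (Cmul W x1i) (Cmul W x2j)) (Cmul (Cmul W x1j) (Cmul W x2i))).
  ring. rewrite E1, E2, E3, E4. ring.
Qed.

Definition wedgeC (x y : nat -> Cx) (i j : nat) : Cx := Csub (Cmul (x i) (y j)) (Cmul (x j) (y i)).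
Definition HcR c s1 s2 s3 i j k : Cx :=
  Cadd (Cadd (Cmul (Cf c s1 s2 k) (wedgeC (fun m => Om c m s2 s3) (fun m => Om c s1 m s3) i j))
             (Cmul (Cf c s1 s3 k) (wedgeC (fun m => Om c m s2 s3) (fun m => Om c s1 s2 m) i j)))
       (Cmul (Cf c s2 s3 k) (wedgeC (fun m => Om c s1 m s3) (fun m => Om c s1 s2 m) i j)).

Lemma Hc_lemma n c s1 s2 s3 p r (f1 f2 : nat -> Cn -> Cx) :
  (s1 < s2)%nat -> (s2 < s3)%nat -> (s3 < n)%nat -> (r > 0)%R -> Om c s1 s2 s3 <> C0 ->
  (forall z, in_ball n p r z ->
   (forall a b, (a < b < n)%nat -> eta_lin n c a b z = wedge11 f1 f2 a b z) /\
   (forall a b cc d, (a < b)%nat -> (b < cc)%nat -> (cc < d)%nat -> (d < n)%nat ->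
      Qexpr (Om c) (fun i => f1 i z) a b cc d = C0 /\
      Qexpr (Om c) (fun i => f2 i z) a b cc d = C0)) ->
  forall i j k, (i < n)%nat -> (j < n)%nat -> (k < n)%nat ->
  Cmul (Cmul (Om c s1 s2 s3) (Om c s1 s2 s3)) (Cf c i j k) = HcR c s1 s2 s3 i j k.
Proof.
  intros H1 H2 H3 Hr HW Hball.
  set (W := Om c s1 s2 s3) in *.
  assert (Hlt : forall i j k, (i < j)%nat -> (j < n)%nat -> (k < n)%nat ->
     Cmul (Cmul W W) (Cf c i j k) = HcR c s1 s2 s3 i j k).
  { intros i j k Hij Hj Hk. unfold HcR. rewrite !Cf_lt by lia.
    set (UV := wedgeC (fun m => Om c m s2 s3) (fun m => Om c s1 m s3) i j).
    set (UW := wedgeC (fun m => Om c m s2 s3) (fun m => Om c s1 s2 m) i j).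
    set (VW := wedgeC (fun m => Om c s1 m s3) (fun m => Om c s1 s2 m) i j).
    apply (lin_close _ _ (Csub (Cmul (Cmul W W) (c i j k))
        (Cadd (Cadd (Cmul (c s1 s2 k) UV) (Cmul (c s1 s3 k) UW)) (Cmul (c s2 s3 k) VW)))).
    2:{ left. reflexivity. }
    revert k Hk.
    apply (lin_zero_ball n p r (fun k => Csub (Cmul (Cmul W W) (c i j k))
        (Cadd (Cadd (Cmul (c s1 s2 k) UV) (Cmul (c s1 s3 k) UW)) (Cmul (c s2 s3 k) VW)))); auto.
    intros y Hy.
    rewrite (Csum_ext n _ (fun k => Csub (Cmul (Cmul W W) (Cmul (c i j k) (y k)))
        (Cadd (Cadd (Cmul UV (Cmul (c s1 s2 k) (y k))) (Cmul UW (Cmul (c s1 s3 k) (y k))))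
              (Cmul VW (Cmul (c s2 s3 k) (y k)))))) by (intros; ring).
    rewrite Csum_sub, !Csum_add, !Csum_scal.
    change (Csum n (fun k => Cmul (c i j k) (y k))) with (eta_lin n c i j y).
    change (Csum n (fun k => Cmul (c s1 s2 k) (y k))) with (eta_lin n c s1 s2 y).
    change (Csum n (fun k => Cmul (c s1 s3 k) (y k))) with (eta_lin n c s1 s3 y).
    change (Csum n (fun k => Cmul (c s2 s3 k) (y k))) with (eta_lin n c s2 s3 y).
    destruct (Hball y Hy) as [He HQ].
    rewrite !He by lia. unfold wedge11.
    assert (V1 := V_member n c s1 s2 s3 (fun i => f1 i y) H1 H2 H3
                    (fun a b cc d h1 h2 h3 h4 => proj1 (HQ a b cc d h1 h2 h3 h4))).
    assert (V2 := V_member n c s1 s2 s3 (fun i => f2 i y) H1 H2 H3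
                    (fun a b cc d h1 h2 h3 h4 => proj2 (HQ a b cc d h1 h2 h3 h4))).
    simpl in V1, V2. fold W in V1, V2.
    rewrite (hc_alg W _ _ _ _ _ _ _ _ _ _ _ _ _ _ _ _ HW (V1 i ltac:(lia)) (V1 j ltac:(lia))
               (V2 i ltac:(lia)) (V2 j ltac:(lia))).
    unfold UV, UW, VW, wedgeC. ring. }
  intros i j k Hi Hj Hk.
  destruct (Nat.lt_trichotomy i j) as [L|[E|G]].
  - apply Hlt; auto.
  - subst j. rewrite Cf_diag. unfold HcR, wedgeC. ring.
  - rewrite Cf_anti. transitivity (Copp (Cmul (Cmul W W) (Cf c j i k))). ring.
    rewrite Hlt by auto. unfold HcR, wedgeC. ring.
Qed.

Lemma alpha_alg (W uk vk wk a1 a2 a3 b2 g1 X1 X2 ak : Cx) : W <> C0 ->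
  wk = Cadd (Csub X1 X2) ak ->
  Cmul (Cmul W W) X1 = Csub (Cmul g1 (Cmul W wk)) (Cmul a1 (Cmul uk W)) ->
  Cmul (Cmul W W) X2 = Cadd (Cmul a2 (Cmul W vk)) (Cmul b2 (Cmul W wk)) ->
  W = Cadd (Csub g1 b2) a3 ->
  Cmul W ak = Cadd (Cadd (Cmul a1 uk) (Cmul a2 vk)) (Cmul a3 wk).
Proof.
  intros HW Hw E1 E2 EW. apply (Cmul_cancel W); auto.
  transitivity (Cadd (Csub (Cmul (Cmul W W) wk) (Cmul (Cmul W W) X1)) (Cmul (Cmul W W) X2)).
  rewrite Hw; ring. rewrite E1, E2.
  assert (a3 = Cadd (Csub W g1) b2) by (rewrite EW; ring). subst a3. ring.
Qed.

Lemma beta_alg (W uk vk wk a3 b1 b2 b3 g1 Y1 Y2 bk : Cx) : W <> C0 ->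
  vk = Cadd (Csub Y1 bk) Y2 ->
  Cmul (Cmul W W) Y1 = Cadd (Cmul b1 (Cmul uk W)) (Cmul g1 (Cmul vk W)) ->
  Cmul (Cmul W W) Y2 = Cadd (Cmul a3 (Cmul W vk)) (Cmul b3 (Cmul W wk)) ->
  W = Cadd (Csub g1 b2) a3 ->
  Cmul W bk = Cadd (Cadd (Cmul b1 uk) (Cmul b2 vk)) (Cmul b3 wk).
Proof.
  intros HW Hv E1 E2 EW. apply (Cmul_cancel W); auto.
  transitivity (Csub (Cadd (Cmul (Cmul W W) Y1) (Cmul (Cmul W W) Y2)) (Cmul (Cmul W W) vk)).
  rewrite Hv; ring. rewrite E1, E2.
  assert (b2 = Csub (Cadd g1 a3) W) by (rewrite EW; ring). subst b2. ring.
Qed.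

Lemma gamma_alg (W uk vk wk a3 b2 g1 g2 g3 Z1 Z2 gk : Cx) : W <> C0 ->
  uk = Cadd (Csub gk Z1) Z2 ->
  Cmul (Cmul W W) Z1 = Cadd (Cmul b2 (Cmul uk W)) (Cmul g2 (Cmul vk W)) ->
  Cmul (Cmul W W) Z2 = Csub (Cmul a3 (Cmul uk W)) (Cmul g3 (Cmul W wk)) ->
  W = Cadd (Csub g1 b2) a3 ->
  Cmul W gk = Cadd (Cadd (Cmul g1 uk) (Cmul g2 vk)) (Cmul g3 wk).
Proof.
  intros HW Hu E1 E2 EW. apply (Cmul_cancel W); auto.
  transitivity (Csub (Cadd (Cmul (Cmul W W) uk) (Cmul (Cmul W W) Z1)) (Cmul (Cmul W W) Z2)).
  rewrite Hu; ring. rewrite E1, E2.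
  assert (g1 = Csub (Cadd W b2) a3) by (rewrite EW; ring). subst g1. ring.
Qed.

Lemma omega_alg (W ui uj uk vi vj vk wi wj wk ai aj ak bi bj bk gi gj gk
   a1 a2 a3 b1 b2 b3 g1 g2 g3 Cjki Cikj Cijk : Cx) : W <> C0 ->
  W = Cadd (Csub g1 b2) a3 ->
  Cmul W ai = Cadd (Cadd (Cmul a1 ui) (Cmul a2 vi)) (Cmul a3 wi) ->
  Cmul W aj = Cadd (Cadd (Cmul a1 uj) (Cmul a2 vj)) (Cmul a3 wj) ->
  Cmul W ak = Cadd (Cadd (Cmul a1 uk) (Cmul a2 vk)) (Cmul a3 wk) ->
  Cmul W bi = Cadd (Cadd (Cmul b1 ui) (Cmul b2 vi)) (Cmul b3 wi) ->
  Cmul W bj = Cadd (Cadd (Cmul b1 uj) (Cmul b2 vj)) (Cmul b3 wj) ->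
  Cmul W bk = Cadd (Cadd (Cmul b1 uk) (Cmul b2 vk)) (Cmul b3 wk) ->
  Cmul W gi = Cadd (Cadd (Cmul g1 ui) (Cmul g2 vi)) (Cmul g3 wi) ->
  Cmul W gj = Cadd (Cadd (Cmul g1 uj) (Cmul g2 vj)) (Cmul g3 wj) ->
  Cmul W gk = Cadd (Cadd (Cmul g1 uk) (Cmul g2 vk)) (Cmul g3 wk) ->
  Cmul (Cmul W W) Cjki = Cadd (Cadd (Cmul ai (Csub (Cmul uj vk) (Cmul uk vj)))
        (Cmul bi (Csub (Cmul uj wk) (Cmul uk wj)))) (Cmul gi (Csub (Cmul vj wk) (Cmul vk wj))) ->
  Cmul (Cmul W W) Cikj = Cadd (Cadd (Cmul aj (Csub (Cmul ui vk) (Cmul uk vi)))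
        (Cmul bj (Csub (Cmul ui wk) (Cmul uk wi)))) (Cmul gj (Csub (Cmul vi wk) (Cmul vk wi))) ->
  Cmul (Cmul W W) Cijk = Cadd (Cadd (Cmul ak (Csub (Cmul ui vj) (Cmul uj vi)))
        (Cmul bk (Csub (Cmul ui wj) (Cmul uj wi)))) (Cmul gk (Csub (Cmul vi wj) (Cmul vj wi))) ->
  Cmul (Cmul W W) (Cadd (Csub Cjki Cikj) Cijk) =
  Cadd (Csub (Cmul ui (Csub (Cmul vj wk) (Cmul vk wj))) (Cmul uj (Csub (Cmul vi wk) (Cmul vk wi))))
       (Cmul uk (Csub (Cmul vi wj) (Cmul vj wi))).
Proof.
  intros HW EW Ai Aj Ak Bi Bj Bk Gi Gj Gk E1 E2 E3.
  transitivity (Cadd (Csub (Cmul (Cmul W W) Cjki) (Cmul (Cmul W W) Cikj)) (Cmul (Cmul W W) Cijk)).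
  ring. rewrite E1, E2, E3. apply (Cmul_cancel W); auto.
  transitivity (Cadd (Csub
    (Cadd (Cadd (Cmul (Cmul W ai) (Csub (Cmul uj vk) (Cmul uk vj)))
        (Cmul (Cmul W bi) (Csub (Cmul uj wk) (Cmul uk wj)))) (Cmul (Cmul W gi) (Csub (Cmul vj wk) (Cmul vk wj))))
    (Cadd (Cadd (Cmul (Cmul W aj) (Csub (Cmul ui vk) (Cmul uk vi)))
        (Cmul (Cmul W bj) (Csub (Cmul ui wk) (Cmul uk wi)))) (Cmul (Cmul W gj) (Csub (Cmul vi wk) (Cmul vk wi)))))
    (Cadd (Cadd (Cmul (Cmul W ak) (Csub (Cmul ui vj) (Cmul uj vi)))
        (Cmul (Cmul W bk) (Csub (Cmul ui wj) (Cmul uj wi)))) (Cmul (Cmul W gk) (Csub (Cmul vi wj) (Cmul vj wi))))).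
  ring. rewrite Ai, Aj, Ak, Bi, Bj, Bk, Gi, Gj, Gk.
  assert (a3 = Cadd (Csub W g1) b2) by (rewrite EW; ring). subst a3. ring.
Qed.

Definition det3v (x y z : nat -> Cx) (i j k : nat) : Cx :=
  Cadd (Csub (Cmul (x i) (Csub (Cmul (y j) (z k)) (Cmul (y k) (z j))))
             (Cmul (x j) (Csub (Cmul (y i) (z k)) (Cmul (y k) (z i)))))
       (Cmul (x k) (Csub (Cmul (y i) (z j)) (Cmul (y j) (z i)))).

Lemma struct_lemma n c s1 s2 s3 :
  (s1 < s2)%nat -> (s2 < s3)%nat -> (s3 < n)%nat -> Om c s1 s2 s3 <> C0 ->
  (forall i j k, (i < n)%nat -> (j < n)%nat -> (k < n)%nat ->
     Cmul (Cmul (Om c s1 s2 s3) (Om c s1 s2 s3)) (Cf c i j k) = HcR c s1 s2 s3 i j k) ->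
  let W := Om c s1 s2 s3 in
  let u := fun m => Om c m s2 s3 in
  let v := fun m => Om c s1 m s3 in
  let w := fun m => Om c s1 s2 m in
  (forall k, (k < n)%nat -> Cmul W (Cf c s1 s2 k) =
     Cadd (Cadd (Cmul (Cf c s1 s2 s1) (u k)) (Cmul (Cf c s1 s2 s2) (v k))) (Cmul (Cf c s1 s2 s3) (w k))) /\
  (forall k, (k < n)%nat -> Cmul W (Cf c s1 s3 k) =
     Cadd (Cadd (Cmul (Cf c s1 s3 s1) (u k)) (Cmul (Cf c s1 s3 s2) (v k))) (Cmul (Cf c s1 s3 s3) (w k))) /\
  (forall k, (k < n)%nat -> Cmul W (Cf c s2 s3 k) =
     Cadd (Cadd (Cmul (Cf c s2 s3 s1) (u k)) (Cmul (Cf c s2 s3 s2) (v k))) (Cmul (Cf c s2 s3 s3) (w k))) /\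
  (forall i j k, (i < n)%nat -> (j < n)%nat -> (k < n)%nat ->
     Cmul (Cmul W W) (Om c i j k) = det3v u v w i j k).
Proof.
  intros H1 H2 H3 HW Hc W u v w.
  assert (us2 : Om c s2 s2 s3 = C0) by apply Om_rep12.
  assert (us3 : Om c s3 s2 s3 = C0) by apply Om_rep13.
  assert (vs1 : Om c s1 s1 s3 = C0) by apply Om_rep12.
  assert (vs3 : Om c s1 s3 s3 = C0) by apply Om_rep23.
  assert (ws1 : Om c s1 s2 s1 = C0) by apply Om_rep13.
  assert (ws2 : Om c s1 s2 s2 = C0) by apply Om_rep23.
  assert (EW : W = Cadd (Csub (Cf c s2 s3 s1) (Cf c s1 s3 s2)) (Cf c s1 s2 s3)) by reflexivity.
  assert (AV : forall k, (k < n)%nat -> Cmul W (Cf c s1 s2 k) =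
     Cadd (Cadd (Cmul (Cf c s1 s2 s1) (u k)) (Cmul (Cf c s1 s2 s2) (v k))) (Cmul (Cf c s1 s2 s3) (w k))).
  { intros k Hk.
    pose proof (Hc s2 k s1 ltac:(lia) Hk ltac:(lia)) as E1.
    pose proof (Hc s1 k s2 ltac:(lia) Hk ltac:(lia)) as E2.
    unfold HcR, wedgeC in E1, E2. rewrite ?us2, ?us3, ?vs1, ?vs3, ?ws1, ?ws2 in E1; rewrite ?us2, ?us3, ?vs1, ?vs3, ?ws1, ?ws2 in E2.
    apply (alpha_alg W (u k) (v k) (w k) _ _ _ (Cf c s1 s3 s2) (Cf c s2 s3 s1)
             (Cf c s2 k s1) (Cf c s1 k s2)); auto.
    - fold W in E1. rewrite E1. unfold u, v, w. ring.
    - fold W in E2. rewrite E2. unfold u, v, w. ring. }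
  assert (BV : forall k, (k < n)%nat -> Cmul W (Cf c s1 s3 k) =
     Cadd (Cadd (Cmul (Cf c s1 s3 s1) (u k)) (Cmul (Cf c s1 s3 s2) (v k))) (Cmul (Cf c s1 s3 s3) (w k))).
  { intros k Hk.
    pose proof (Hc k s3 s1 Hk ltac:(lia) ltac:(lia)) as E1.
    pose proof (Hc s1 k s3 ltac:(lia) Hk ltac:(lia)) as E2.
    unfold HcR, wedgeC in E1, E2. rewrite ?us2, ?us3, ?vs1, ?vs3, ?ws1, ?ws2 in E1; rewrite ?us2, ?us3, ?vs1, ?vs3, ?ws1, ?ws2 in E2.
    apply (beta_alg W (u k) (v k) (w k) (Cf c s1 s2 s3) _ _ _ (Cf c s2 s3 s1)
             (Cf c k s3 s1) (Cf c s1 k s3)); auto.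
    - fold W in E1. rewrite E1. unfold u, v, w. ring.
    - fold W in E2. rewrite E2. unfold u, v, w. ring. }
  assert (GV : forall k, (k < n)%nat -> Cmul W (Cf c s2 s3 k) =
     Cadd (Cadd (Cmul (Cf c s2 s3 s1) (u k)) (Cmul (Cf c s2 s3 s2) (v k))) (Cmul (Cf c s2 s3 s3) (w k))).
  { intros k Hk.
    pose proof (Hc k s3 s2 Hk ltac:(lia) ltac:(lia)) as E1.
    pose proof (Hc k s2 s3 Hk ltac:(lia) ltac:(lia)) as E2.
    unfold HcR, wedgeC in E1, E2. rewrite ?us2, ?us3, ?vs1, ?vs3, ?ws1, ?ws2 in E1; rewrite ?us2, ?us3, ?vs1, ?vs3, ?ws1, ?ws2 in E2.
    apply (gamma_alg W (u k) (v k) (w k) (Cf c s1 s2 s3) (Cf c s1 s3 s2) _ _ _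
             (Cf c k s3 s2) (Cf c k s2 s3)); auto.
    - fold W in E1. rewrite E1. unfold u, v, w. ring.
    - fold W in E2. rewrite E2. unfold u, v, w. ring. }
  split; [exact AV|]. split; [exact BV|]. split; [exact GV|].
  intros i j k Hi Hj Hk. unfold Om at 1.
  apply (omega_alg W (u i) (u j) (u k) (v i) (v j) (v k) (w i) (w j) (w k)
    _ _ _ _ _ _ _ _ _ _ _ _ _ _ _ _ _ _ _ _ _ HW EW
    (AV i Hi) (AV j Hj) (AV k Hk) (BV i Hi) (BV j Hj) (BV k Hk) (GV i Hi) (GV j Hj) (GV k Hk));
  [apply (Hc j k i) | apply (Hc i k j) | apply (Hc i j k)]; auto.
Qed.

Definition tr (a b j : nat) : nat := if Nat.eqb j a then b else if Nat.eqb j b then a else j.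
Lemma tr_invol a b j : tr a b (tr a b j) = j.
Proof. unfold tr. destruct (Nat.eqb_spec j a); destruct (Nat.eqb_spec j b); repeat match goal with |- context [Nat.eqb ?x ?y] => destruct (Nat.eqb_spec x y) end; lia. Qed.
Lemma tr_lt a b j n : (a < n)%nat -> (b < n)%nat -> (j < n)%nat -> (tr a b j < n)%nat.
Proof. unfold tr. repeat match goal with |- context [Nat.eqb ?x ?y] => destruct (Nat.eqb_spec x y) end; lia. Qed.

Definition sig s1 s2 s3 j := tr 0 s1 (tr 1 s2 (tr 2 s3 j)).
Definition rho s1 s2 s3 j := tr 2 s3 (tr 1 s2 (tr 0 s1 j)).
Lemma sig_rho s1 s2 s3 j : sig s1 s2 s3 (rho s1 s2 s3 j) = j.
Proof. unfold sig, rho. rewrite !tr_invol. reflexivity. Qed.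
Lemma rho_sig s1 s2 s3 j : rho s1 s2 s3 (sig s1 s2 s3 j) = j.
Proof. unfold sig, rho. rewrite !tr_invol. reflexivity. Qed.
Lemma rho_lt s1 s2 s3 n j : (s1 < s2)%nat -> (s2 < s3)%nat -> (s3 < n)%nat -> (j < n)%nat ->
  (rho s1 s2 s3 j < n)%nat.
Proof. intros. unfold rho. repeat apply tr_lt; lia. Qed.
Lemma sig_lt s1 s2 s3 n j : (s1 < s2)%nat -> (s2 < s3)%nat -> (s3 < n)%nat -> (j < n)%nat ->
  (sig s1 s2 s3 j < n)%nat.
Proof. intros. unfold sig. repeat apply tr_lt; lia. Qed.
Lemma tr_other a b j : j <> a -> j <> b -> tr a b j = j.
Proof. intros. unfold tr. destruct (Nat.eqb_spec j a); [lia|]. destruct (Nat.eqb_spec j b); [lia|auto]. Qed.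
Lemma tr_a a b : tr a b a = b.
Proof. unfold tr. rewrite Nat.eqb_refl. auto. Qed.
Lemma tr_b a b : tr a b b = a.
Proof. unfold tr. destruct (Nat.eqb_spec b a); subst; auto. rewrite Nat.eqb_refl. auto. Qed.
Lemma sig0 s1 s2 s3 : (s1 < s2)%nat -> (s2 < s3)%nat -> sig s1 s2 s3 0 = s1.
Proof. intros. unfold sig. rewrite (tr_other 2 s3 0), (tr_other 1 s2 0) by lia. apply tr_a. Qed.
Lemma sig1 s1 s2 s3 : (s1 < s2)%nat -> (s2 < s3)%nat -> sig s1 s2 s3 1 = s2.
Proof. intros. unfold sig. rewrite (tr_other 2 s3 1) by lia. rewrite tr_a. apply tr_other; lia. Qed.
Lemma sig2 s1 s2 s3 : (s1 < s2)%nat -> (s2 < s3)%nat -> sig s1 s2 s3 2 = s3.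
Proof. intros. unfold sig. rewrite tr_a. rewrite (tr_other 1 s2 s3) by lia. apply tr_other; lia. Qed.

Lemma Csum_tr n f a b : (a < n)%nat -> (b < n)%nat ->
  Csum n (fun j => f (tr a b j)) = Csum n f.
Proof.
  intros Ha Hb. destruct (Nat.eq_dec a b) as [<-|Hab].
  { apply Csum_ext. intros k _. unfold tr. destruct (Nat.eqb_spec k a); subst; auto. }
  rewrite (Csum_remove n _ a Ha), (Csum_remove n f a Ha).
  rewrite (Csum_remove n _ b Hb), (Csum_remove n (fun k => if Nat.eqb k a then C0 else f k) b Hb).
  assert (E : forall k, (k < n)%nat ->
     (fun k0 => if Nat.eqb k0 b then C0 else if Nat.eqb k0 a then C0 else f (tr a b k0)) k =
     (fun k0 => if Nat.eqb k0 b then C0 else if Nat.eqb k0 a then C0 else f k0) k).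
  { intros k _. simpl. destruct (Nat.eqb_spec k b); auto. destruct (Nat.eqb_spec k a); auto.
    rewrite tr_other; auto. }
  rewrite (Csum_ext n _ _ E).
  unfold tr. rewrite !Nat.eqb_refl. destruct (Nat.eqb_spec b a); [lia|]. ring.
Qed.

Lemma Csum_rho n s1 s2 s3 f : (s1 < s2)%nat -> (s2 < s3)%nat -> (s3 < n)%nat ->
  Csum n (fun j => f (rho s1 s2 s3 j)) = Csum n f.
Proof.
  intros. unfold rho.
  rewrite (Csum_tr n (fun j => f (tr 2 s3 (tr 1 s2 j))) 0 s1) by lia.
  rewrite (Csum_tr n (fun j => f (tr 2 s3 j)) 1 s2) by lia.
  rewrite (Csum_tr n f 2 s3) by lia. reflexivity.
Qed.

Definition Lmat (W : Cx) (U V X : nat -> Cx) (i m : nat) : Cx :=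
  if Nat.eqb i 0 then U m else if Nat.eqb i 1 then Cdiv (V m) W
  else if Nat.eqb i 2 then Cdiv (X m) W else Cdelta i m.
Definition Lin (W : Cx) (U V X : nat -> Cx) (m j : nat) : Cx :=
  if Nat.eqb m 0 then (if Nat.eqb j 0 then Cinv W else if Nat.ltb j 3 then C0 else Copp (Cdiv (U j) W))
  else if Nat.eqb m 1 then (if Nat.eqb j 1 then C1 else if Nat.ltb j 3 then C0 else Copp (Cdiv (V j) W))
  else if Nat.eqb m 2 then (if Nat.eqb j 2 then C1 else if Nat.ltb j 3 then C0 else Copp (Cdiv (X j) W))
  else Cdelta m j.

Lemma Csum_two n f p q : (p < n)%nat -> (q < n)%nat -> p <> q ->
  (forall k, (k < n)%nat -> k <> p -> k <> q -> f k = C0) -> Csum n f = Cadd (f p) (f q).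
Proof.
  intros Hp Hq Hpq H. rewrite (Csum_remove n f p Hp). f_equal.
  rewrite (Csum_point n _ q Hq).
  - destruct (Nat.eqb_spec q p); [lia|auto].
  - intros k Hk Hkq. destruct (Nat.eqb_spec k p); auto.
Qed.

Ltac natcases :=
  repeat match goal with
  | |- context [Nat.eqb ?x ?y] => destruct (Nat.eqb_spec x y) as [?H|?H]; [try subst x; try subst y|]
  | |- context [Nat.ltb ?x ?y] => destruct (Nat.ltb_spec x y)
  end; try lia.

Lemma LinL n W U V X a b : W <> C0 ->
  U 0%nat = W -> U 1%nat = C0 -> U 2%nat = C0 ->
  V 0%nat = C0 -> V 1%nat = W -> V 2%nat = C0 ->
  X 0%nat = C0 -> X 1%nat = C0 -> X 2%nat = W -> (3 <= n)%nat ->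
  (a < n)%nat -> (b < n)%nat ->
  Csum n (fun j => Cmul (Lin W U V X a j) (Lmat W U V X j b)) = Cdelta a b.
Proof.
  intros HW U0 U1 U2 V0 V1 V2 X0 X1 X2 Hn Ha Hb.
  destruct (Nat.lt_ge_cases a 3) as [Ha3|Ha3].
  - destruct (Nat.lt_ge_cases b 3) as [Hb3|Hb3].
    + rewrite (Csum_point n _ a Ha).
      2:{ intros k Hk Hka. unfold Lin, Lmat, Cdelta; fold C1. natcases; unfold Cdiv; ring. }
      destruct a as [|[|[|a]]]; try lia; destruct b as [|[|[|b]]]; try lia;
      unfold Lin, Lmat, Cdelta; fold C1; natcases; rewrite ?U0, ?U1, ?U2, ?V0, ?V1, ?V2, ?X0, ?X1, ?X2;
          unfold Cdiv; try field; auto.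
    + rewrite (Csum_two n _ a b Ha Hb ltac:(lia)).
      2:{ intros k Hk Hka Hkb. unfold Lin, Lmat, Cdelta; fold C1. natcases; unfold Cdiv; ring. }
      destruct a as [|[|[|a]]]; try lia;
      unfold Lin, Lmat, Cdelta; fold C1; natcases; rewrite ?U0, ?U1, ?U2, ?V0, ?V1, ?V2, ?X0, ?X1, ?X2;
          unfold Cdiv; try field; auto.
  - rewrite (Csum_point n _ a Ha).
    + unfold Lin, Lmat, Cdelta; fold C1. natcases; unfold Cdiv; ring.
    + intros k Hk Hka. unfold Lin, Lmat, Cdelta; fold C1. natcases; unfold Cdiv; ring.
Qed.

Ltac LLtac0 U0 U1 U2 V0 V1 V2 X0 X1 X2 := unfold Lin, Lmat, Cdelta; fold C1; natcases;
  rewrite ?U0, ?U1, ?U2, ?V0, ?V1, ?V2, ?X0, ?X1, ?X2; unfold Cdiv; try field; auto.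

Lemma LLin n W U V X i k : W <> C0 ->
  U 0%nat = W -> U 1%nat = C0 -> U 2%nat = C0 ->
  V 0%nat = C0 -> V 1%nat = W -> V 2%nat = C0 ->
  X 0%nat = C0 -> X 1%nat = C0 -> X 2%nat = W -> (3 <= n)%nat ->
  (i < n)%nat -> (k < n)%nat ->
  Csum n (fun m => Cmul (Lmat W U V X i m) (Lin W U V X m k)) = Cdelta i k.
Proof.
  intros HW U0 U1 U2 V0 V1 V2 X0 X1 X2 Hn Hi Hk.
  destruct (Nat.lt_ge_cases i 3) as [Hi3|Hi3].
  - destruct (Nat.lt_ge_cases k 3) as [Hk3|Hk3].
    + rewrite (Csum_point n _ i Hi).
      2:{ intros m Hm Hmi. destruct (Nat.lt_ge_cases m 3) as [Hm3|Hm3].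
          - destruct m as [|[|[|m]]]; try lia; destruct i as [|[|[|i]]]; try lia; LLtac0 U0 U1 U2 V0 V1 V2 X0 X1 X2.
          - LLtac0 U0 U1 U2 V0 V1 V2 X0 X1 X2. }
      destruct i as [|[|[|i]]]; try lia; destruct k as [|[|[|k]]]; try lia; LLtac0 U0 U1 U2 V0 V1 V2 X0 X1 X2.
    + rewrite (Csum_two n _ i k Hi Hk ltac:(lia)).
      2:{ intros m Hm Hmi Hmk. destruct (Nat.lt_ge_cases m 3) as [Hm3|Hm3].
          - destruct m as [|[|[|m]]]; try lia; destruct i as [|[|[|i]]]; try lia; LLtac0 U0 U1 U2 V0 V1 V2 X0 X1 X2.
          - LLtac0 U0 U1 U2 V0 V1 V2 X0 X1 X2. }
      destruct i as [|[|[|i]]]; try lia; LLtac0 U0 U1 U2 V0 V1 V2 X0 X1 X2.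
  - rewrite (Csum_point n _ i Hi).
    + LLtac0 U0 U1 U2 V0 V1 V2 X0 X1 X2.
    + intros m Hm Hmi. LLtac0 U0 U1 U2 V0 V1 V2 X0 X1 X2.
Qed.

Definition C2 : Cx := Cadd C1 C1.
Definition qdef (W a1 a2 a3 b1 b2 b3 g2 g3 : Cx) (j u v : nat) : Cx :=
  match j, u, v with
  | 1, 0, 0 => Cdiv a1 (Cmul C2 (Cmul W W)) | 1, 0, 1 => Cdiv a2 W | 1, 0, 2 => Cdiv a3 W
  | 2, 0, 0 => Cdiv b1 (Cmul C2 (Cmul W W)) | 2, 0, 1 => Cdiv b2 W | 2, 0, 2 => Cdiv b3 W
  | 2, 1, 1 => Cdiv g2 C2 | 2, 1, 2 => g3
  | _, _, _ => C0 end.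
Definition betadef (W a1 a2 a3 b1 b2 b3 g1 g2 g3 : Cx) (i j m : nat) : Cx :=
  match i, j, m with
  | 0, 1, 0 => Cdiv a1 (Cmul W W) | 0, 1, 1 => Cdiv a2 W | 0, 1, 2 => Cdiv a3 W
  | 0, 2, 0 => Cdiv b1 (Cmul W W) | 0, 2, 1 => Cdiv b2 W | 0, 2, 2 => Cdiv b3 W
  | 1, 2, 0 => Cdiv g1 W | 1, 2, 1 => g2 | 1, 2, 2 => g3
  | _, _, _ => C0 end.

Lemma C2_neq : C2 <> C0.
Proof. unfold C2, C1, C0, Cadd. simpl. intro H. injection H. lra. Qed.

Lemma final_alg (P : nat -> nat -> Cx) (x : nat -> Cx) (a b : nat)
  (W a1 a2 a3 b1 b2 b3 g1 g2 g3 ua ub va vb wa wb Sa Sb Sg L : Cx) : W <> C0 ->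
  P 0%nat a = ua -> P 0%nat b = ub -> P 1%nat a = Cdiv va W -> P 1%nat b = Cdiv vb W ->
  P 2%nat a = Cdiv wa W -> P 2%nat b = Cdiv wb W ->
  Cmul W Sa = Cadd (Cadd (Cmul a1 (x 0%nat)) (Cmul a2 (Cmul W (x 1%nat)))) (Cmul a3 (Cmul W (x 2%nat))) ->
  Cmul W Sb = Cadd (Cadd (Cmul b1 (x 0%nat)) (Cmul b2 (Cmul W (x 1%nat)))) (Cmul b3 (Cmul W (x 2%nat))) ->
  Cmul W Sg = Cadd (Cadd (Cmul g1 (x 0%nat)) (Cmul g2 (Cmul W (x 1%nat)))) (Cmul g3 (Cmul W (x 2%nat))) ->
  Cmul (Cmul W W) L = Cadd (Cadd (Cmul Sa (Csub (Cmul ua vb) (Cmul ub va)))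
      (Cmul Sb (Csub (Cmul ua wb) (Cmul ub wa)))) (Cmul Sg (Csub (Cmul va wb) (Cmul vb wa))) ->
  (L = pull2 3 P (fun i j => if Nat.ltb i j
        then Csum 3 (fun m => Cmul (betadef W a1 a2 a3 b1 b2 b3 g1 g2 g3 i j m) (x m)) else C0) a b) /\
  (W = Cadd (Csub g1 b2) a3 ->
   L = pull2 3 P (T_normal (qdef W a1 a2 a3 b1 b2 b3 g2 g3) x) a b).
Proof.
  intros HW P0a P0b P1a P1b P2a P2b ESa ESb ESg EL.
  assert (HSa : Sa = Cdiv (Cadd (Cadd (Cmul a1 (x 0%nat)) (Cmul a2 (Cmul W (x 1%nat)))) (Cmul a3 (Cmul W (x 2%nat)))) W)
    by (rewrite <- ESa; unfold Cdiv; field; auto).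
  assert (HSb : Sb = Cdiv (Cadd (Cadd (Cmul b1 (x 0%nat)) (Cmul b2 (Cmul W (x 1%nat)))) (Cmul b3 (Cmul W (x 2%nat)))) W)
    by (rewrite <- ESb; unfold Cdiv; field; auto).
  assert (HSg : Sg = Cdiv (Cadd (Cadd (Cmul g1 (x 0%nat)) (Cmul g2 (Cmul W (x 1%nat)))) (Cmul g3 (Cmul W (x 2%nat)))) W)
    by (rewrite <- ESg; unfold Cdiv; field; auto).
  assert (HL : L = Cdiv (Cadd (Cadd (Cmul Sa (Csub (Cmul ua vb) (Cmul ub va)))
      (Cmul Sb (Csub (Cmul ua wb) (Cmul ub wa)))) (Cmul Sg (Csub (Cmul va wb) (Cmul vb wa)))) (Cmul W W))
    by (rewrite <- EL; unfold Cdiv; field; auto).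
  subst L Sa Sb Sg.
  pose proof C2_neq.
  split.
  - unfold pull2. cbn [Csum Nat.ltb Nat.leb betadef].
    rewrite P0a, P0b, P1a, P1b, P2a, P2b. unfold Cdiv. field. auto.
  - intros EW. assert (a3 = Csub (Cadd W b2) g1) by (rewrite EW; ring). subst a3.
    unfold pull2, T_normal, dA. cbn [Csum Nat.ltb Nat.leb Nat.eqb andb qdef].
    rewrite P0a, P0b, P1a, P1b, P2a, P2b. unfold Cdiv. unfold C2 in *. field. auto.
Qed.

Lemma Csum_comb n (W A B Cc : Cx) (f u v w z : nat -> Cx) :
  (forall k, (k < n)%nat -> Cmul W (f k) = Cadd (Cadd (Cmul A (u k)) (Cmul B (v k))) (Cmul Cc (w k))) ->
  Cmul W (Csum n (fun k => Cmul (f k) (z k))) =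
  Cadd (Cadd (Cmul A (Csum n (fun k => Cmul (u k) (z k)))) (Cmul B (Csum n (fun k => Cmul (v k) (z k)))))
       (Cmul Cc (Csum n (fun k => Cmul (w k) (z k)))).
Proof.
  induction n; intros H; simpl. - ring.
  - transitivity (Cadd (Cmul W (Csum n (fun k => Cmul (f k) (z k)))) (Cmul (Cmul W (f n)) (z n))).
    ring. rewrite IHn by (intros; apply H; lia). rewrite H by lia. ring.
Qed.

Lemma Csum_comb3 n (X Y Z : Cx) (A B Cc z : nat -> Cx) :
  Csum n (fun k => Cmul (Cadd (Cadd (Cmul (A k) X) (Cmul (B k) Y)) (Cmul (Cc k) Z)) (z k)) =
  Cadd (Cadd (Cmul (Csum n (fun k => Cmul (A k) (z k))) X) (Cmul (Csum n (fun k => Cmul (B k) (z k))) Y))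
       (Cmul (Csum n (fun k => Cmul (Cc k) (z k))) Z).
Proof. induction n; simpl. - ring. - rewrite IHn. ring. Qed.

From Stdlib Require Import Classical.

Theorem mainTheorem12 (n : nat) (hn : (4 <= n)%nat)
  (c : nat -> nat -> nat -> Cx)
  (Hint : integrable2 n (eta_lin n c))
  (Hd : exists a b e, (a < b < e)%nat /\ (e < n)%nat /\ d_eta_lin c a b e <> C0) :
  exists (P Q : nat -> nat -> Cx),
    (forall i k, (i < n)%nat -> (k < n)%nat ->
       Csum n (fun j => Cmul (P i j) (Q j k)) = Cdelta i k /\
       Csum n (fun j => Cmul (Q i j) (P j k)) = Cdelta i k) /\
    (forall a b e, (a < b < e)%nat -> (e < n)%nat -> d_eta_lin c a b e = det3 P a b e) /\
    (exists beta : nat -> nat -> nat -> Cx,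
       forall z a b, (a < b < n)%nat ->
         eta_lin n c a b z =
         pull2 3 P (fun i j => if Nat.ltb i j
             then Csum 3 (fun m => Cmul (beta i j m) (coordX n P m z)) else C0) a b) /\
    (exists q : nat -> nat -> nat -> Cx,
       forall z a b, (a < b < n)%nat ->
         eta_lin n c a b z = pull2 3 P (T_normal q (fun m => coordX n P m z)) a b).
Proof.
  destruct Hd as [s1 [s2 [s3 [[H12 H23] [H3 Hne]]]]].
  assert (EWd : Om c s1 s2 s3 = d_eta_lin c s1 s2 s3) by (apply Om_sorted; lia).
  assert (HW : Om c s1 s2 s3 <> C0) by (rewrite EWd; auto).
  assert (Hp : exists p, exists a b, (a < b < n)%nat /\ eta_lin n c a b p <> C0).
  { unfold eta_lin.
    destruct (classic (c s2 s3 s1 = C0)) as [Z1|Z1].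
    2:{ exists (evec s1 C1), s2, s3. split. lia. rewrite Csum_evec by lia.
        replace (Cmul (c s2 s3 s1) C1) with (c s2 s3 s1) by ring. auto. }
    destruct (classic (c s1 s3 s2 = C0)) as [Z2|Z2].
    2:{ exists (evec s2 C1), s1, s3. split. lia. rewrite Csum_evec by lia.
        replace (Cmul (c s1 s3 s2) C1) with (c s1 s3 s2) by ring. auto. }
    exists (evec s3 C1), s1, s2. split. lia. rewrite Csum_evec by lia.
    replace (Cmul (c s1 s2 s3) C1) with (c s1 s2 s3) by ring.
    intro Z3. apply Hne. unfold d_eta_lin. rewrite Z1, Z2, Z3. ring. }
  destruct Hp as [p Hp].
  destruct (analytic n c p Hint Hp) as [r [Hr [f1 [f2 Hball]]]].
  pose proof (Hc_lemma n c s1 s2 s3 p r f1 f2 H12 H23 H3 Hr HW Hball) as Hc.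
  destruct (struct_lemma n c s1 s2 s3 H12 H23 H3 HW Hc) as [AV [BV [GV OM]]].
  set (W := Om c s1 s2 s3) in *.
  set (U := fun m => Om c (sig s1 s2 s3 m) s2 s3).
  set (V := fun m => Om c s1 (sig s1 s2 s3 m) s3).
  set (X := fun m => Om c s1 s2 (sig s1 s2 s3 m)).
  assert (S0 := sig0 s1 s2 s3 H12 H23). assert (S1 := sig1 s1 s2 s3 H12 H23).
  assert (S2 := sig2 s1 s2 s3 H12 H23).
  assert (U0 : U 0%nat = W) by (unfold U; rewrite S0; reflexivity).
  assert (U1 : U 1%nat = C0) by (unfold U; rewrite S1; apply Om_rep12).
  assert (U2 : U 2%nat = C0) by (unfold U; rewrite S2; apply Om_rep13).
  assert (V0 : V 0%nat = C0) by (unfold V; rewrite S0; apply Om_rep12).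
  assert (V1 : V 1%nat = W) by (unfold V; rewrite S1; reflexivity).
  assert (V2 : V 2%nat = C0) by (unfold V; rewrite S2; apply Om_rep23).
  assert (X0 : X 0%nat = C0) by (unfold X; rewrite S0; apply Om_rep13).
  assert (X1 : X 1%nat = C0) by (unfold X; rewrite S1; apply Om_rep23).
  assert (X2 : X 2%nat = W) by (unfold X; rewrite S2; reflexivity).
  set (P := fun i k => Lmat W U V X i (rho s1 s2 s3 k)).
  set (Q := fun k j => Lin W U V X (rho s1 s2 s3 k) j).
  assert (P0 : forall k, P 0%nat k = Om c k s2 s3).
  { intros k. unfold P, Lmat, U. simpl. rewrite sig_rho. reflexivity. }
  assert (P1 : forall k, P 1%nat k = Cdiv (Om c s1 k s3) W).
  { intros k. unfold P, Lmat, V. simpl. rewrite sig_rho. reflexivity. }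
  assert (P2 : forall k, P 2%nat k = Cdiv (Om c s1 s2 k) W).
  { intros k. unfold P, Lmat, X. simpl. rewrite sig_rho. reflexivity. }
  assert (Key : forall z a b, (a < b < n)%nat ->
    (eta_lin n c a b z = pull2 3 P (fun i j => if Nat.ltb i j
        then Csum 3 (fun m => Cmul (betadef W (Cf c s1 s2 s1) (Cf c s1 s2 s2) (Cf c s1 s2 s3)
      (Cf c s1 s3 s1) (Cf c s1 s3 s2) (Cf c s1 s3 s3) (Cf c s2 s3 s1) (Cf c s2 s3 s2) (Cf c s2 s3 s3) i j m)
          (coordX n P m z)) else C0) a b) /\
    (W = Cadd (Csub (Cf c s2 s3 s1) (Cf c s1 s3 s2)) (Cf c s1 s2 s3) ->
     eta_lin n c a b z = pull2 3 P (T_normal (qdef W (Cf c s1 s2 s1) (Cf c s1 s2 s2) (Cf c s1 s2 s3)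
      (Cf c s1 s3 s1) (Cf c s1 s3 s2) (Cf c s1 s3 s3) (Cf c s2 s3 s2) (Cf c s2 s3 s3))
        (fun m => coordX n P m z)) a b)).
  { intros z a b Hab.
    assert (Hx0 : Csum n (fun k => Cmul (Om c k s2 s3) (z k)) = coordX n P 0%nat z).
    { unfold coordX. apply Csum_ext. intros k _. rewrite P0. reflexivity. }
    assert (Hx1 : Csum n (fun k => Cmul (Om c s1 k s3) (z k)) = Cmul W (coordX n P 1%nat z)).
    { unfold coordX. rewrite <- Csum_scal. apply Csum_ext. intros k _. rewrite P1.
      unfold Cdiv. field. auto. }
    assert (Hx2 : Csum n (fun k => Cmul (Om c s1 s2 k) (z k)) = Cmul W (coordX n P 2%nat z)).
    { unfold coordX. rewrite <- Csum_scal. apply Csum_ext. intros k _. rewrite P2.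
      unfold Cdiv. field. auto. }
    apply (final_alg P (fun m => coordX n P m z) a b W _ _ _ _ _ _ _ _ _
      (Om c a s2 s3) (Om c b s2 s3) (Om c s1 a s3) (Om c s1 b s3) (Om c s1 s2 a) (Om c s1 s2 b)
      (Csum n (fun k => Cmul (Cf c s1 s2 k) (z k)))
      (Csum n (fun k => Cmul (Cf c s1 s3 k) (z k)))
      (Csum n (fun k => Cmul (Cf c s2 s3 k) (z k))) (eta_lin n c a b z) HW);
      try apply P0; try apply P1; try apply P2.
    - rewrite (Csum_comb n W _ _ _ _ _ _ _ z AV), Hx0, Hx1, Hx2. reflexivity.
    - rewrite (Csum_comb n W _ _ _ _ _ _ _ z BV), Hx0, Hx1, Hx2. reflexivity.
    - rewrite (Csum_comb n W _ _ _ _ _ _ _ z GV), Hx0, Hx1, Hx2. reflexivity.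
    - unfold eta_lin. rewrite <- Csum_scal.
      rewrite (Csum_ext n _ (fun k => Cmul (HcR c s1 s2 s3 a b k) (z k))).
      + unfold HcR, wedgeC. rewrite Csum_comb3. reflexivity.
      + intros k Hk. rewrite <- (Cf_lt c a b k) by lia. rewrite <- Hc by lia. fold W. ring. }
  exists P, Q. split; [|split; [|split]].
  - intros i k Hi Hk. split.
    + change (Csum n (fun j => (fun m => Cmul (Lmat W U V X i m) (Lin W U V X m k)) (rho s1 s2 s3 j))
              = Cdelta i k).
      rewrite Csum_rho by auto.
      apply LLin; auto; lia.
    + change (Csum n (fun j => Cmul (Lin W U V X (rho s1 s2 s3 i) j) (Lmat W U V X j (rho s1 s2 s3 k)))
              = Cdelta i k).
      rewrite LinL; auto; try lia; try (apply rho_lt; lia).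
      unfold Cdelta. destruct (Nat.eqb_spec (rho s1 s2 s3 i) (rho s1 s2 s3 k)) as [E|E];
        destruct (Nat.eqb_spec i k) as [E'|E']; auto.
      * exfalso. apply E'. rewrite <- (sig_rho s1 s2 s3 i), <- (sig_rho s1 s2 s3 k), E. reflexivity.
      * subst. tauto.
  - intros a b e Hab He. rewrite <- Om_sorted by lia.
    apply (Cmul_cancel (Cmul W W)).
    { intro HWW. apply HW. destruct (classic (W = C0)); auto.
      exfalso. apply H. transitivity (Cmul (Cinv W) (Cmul W W)). field; auto.
      rewrite HWW. ring. }
    rewrite OM by lia. unfold det3, det3v. rewrite !P0, !P1, !P2. unfold Cdiv. field. auto.
  - exists (betadef W (Cf c s1 s2 s1) (Cf c s1 s2 s2) (Cf c s1 s2 s3)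
      (Cf c s1 s3 s1) (Cf c s1 s3 s2) (Cf c s1 s3 s3) (Cf c s2 s3 s1) (Cf c s2 s3 s2) (Cf c s2 s3 s3)).
    intros z a b Hab. apply (proj1 (Key z a b Hab)).
  - exists (qdef W (Cf c s1 s2 s1) (Cf c s1 s2 s2) (Cf c s1 s2 s3)
      (Cf c s1 s3 s1) (Cf c s1 s3 s2) (Cf c s1 s3 s3) (Cf c s2 s3 s2) (Cf c s2 s3 s3)).
    intros z a b Hab. apply (proj2 (Key z a b Hab)). reflexivity.
Qed.
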